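(* Let $(b_n)_{n=0}^\infty$ be a sequence with $b_n>0$, $b_0=1$ and $b_{n+1}/b_n\ge b$ for all $n$, for some $b>1$. Fix $C>0$. Then for every $\epsilon_0>0$ there is $\delta_0>0$ such that the following holds for every $\delta\in(0,\delta_0)$: if $A\subseteq[0,1]^2$ can be covered by $N\le C/\delta$ squares with horizontal and vertical sides of length $\delta$, then there exist $\gamma$ with $0<\gamma<\min\{1,\tfrac1b+\epsilon_0\}$ and $\tilde C>0$ such that for every sequence $\underline{\Theta}=(\underline{\theta_1},\underline{\theta_2},\dots)$ with $\underline{\theta_j}\in\mathbb{R}^2$ and every $n>0$, $$\mathcal{L}(\mathcal{A}_n(\underline{\Theta}))<\tilde C\gamma^n.$$
   Context: $\mathcal{L}$ denotes Lebesgue measure on $\mathbb{R}^2$. For $A\subseteq[0,1]^2$ let $\mathcal{A}=\bigcup_{n,m\in\mathbb{Z}}(A+(n,m))$. For $j\ge1$ and $\underline{\theta_j}\in\mathbb{R}^2$ let $\frac{\mathcal{A}-\underline{\theta_j}}{b_j}=\{(x,y): (b_jx,b_jy)+\underline{\theta_j}\in\mathcal{A}\}$, and define $$\mathcal{A}_n(\underline{\Theta})=[0,1]^2\cap\mathcal{A}\cap\frac{\mathcal{A}-\underline{\theta_1}}{b_1}\cap\frac{\mathcal{A}-\underline{\theta_2}}{b_2}\cap\dots\cap\frac{\mathcal{A}-\underline{\theta_n}}{b_n}.$$ *)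

(* Defs.v *)
From HB Require Import structures.
From mathcomp Require Import all_boot all_order all_algebra.
From mathcomp Require Import all_classical all_reals all_analysis.
Set Implicit Arguments. Unset Strict Implicit. Unset Printing Implicit Defensive.
Import Order.TTheory GRing.Theory Num.Theory.
Local Open Scope classical_set_scope.
Local Open Scope ring_scope.

Definition leb2 {R : realType} :=
  ((@lebesgue_measure R) \x (@lebesgue_measure R))%E.

Definition leb2_outer {R : realType} (S : set (R * R)) : \bar R :=
  ereal_inf [set leb2 B | B in [set B | measurable B /\ S `<=` B]].

Definition unit_square {R : realType} : set (R * R) :=
  [set p | 0 <= p.1 <= 1 /\ 0 <= p.2 <= 1].

Definition square {R : realType} (c : R * R) (d : R) : set (R * R) :=
  [set p | c.1 <= p.1 <= c.1 + d /\ c.2 <= p.2 <= c.2 + d].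

Definition periodize {R : realType} (A : set (R * R)) : set (R * R) :=
  [set p | exists n m : int, A (p.1 - n%:~R, p.2 - m%:~R)].

Definition rescale {R : realType} (S : set (R * R)) (theta : R * R) (beta : R)
  : set (R * R) :=
  [set p | S (beta * p.1 + theta.1, beta * p.2 + theta.2)].

Definition A_n {R : realType} (A : set (R * R)) (b : nat -> R)
  (Theta : nat -> R * R) (n : nat) : set (R * R) :=
  unit_square `&` periodize A `&`
  [set p | forall j : nat, (1 <= j <= n)%N ->
           rescale (periodize A) (Theta j) (b j) p].

(* Main.v *)
Require Import Defs.
From HB Require Import structures.
From mathcomp Require Import all_boot all_order all_algebra.
From mathcomp Require Import all_classical all_reals all_analysis.
From mathcomp Require Import ring lra.
Import Order.TTheory GRing.Theory Num.Theory.
Local Open Scope classical_set_scope.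
Local Open Scope ring_scope.


Lemma leb_cc (R : realType) (a b : R) : a <= b ->
  lebesgue_measure (`[a, b]%classic : set R) = (b - a)%:E.
Proof.
move=> ab; rewrite lebesgue_measure_itv /= lte_fin.
case: (boolP (a < b)) => h; first by rewrite EFinB.
have -> : b = a by apply/eqP; rewrite eq_le ab andbT leNgt.
by rewrite subrr.
Qed.

Lemma square_X (R : realType) (q : R * R) (s : R) :
  square q s = `[q.1, q.1 + s]%classic `*` `[q.2, q.2 + s]%classic.
Proof.
by apply/seteqP; split => p; rewrite /square /= !in_itv.
Qed.

Lemma square_meas (R : realType) (q : R * R) (s : R) : 0 <= s ->
  measurable (square q s) /\ (leb2 (square q s) <= (s ^+ 2)%:E)%E.
Proof.
move=> s0; rewrite square_X; split.
  by apply: measurableX; apply: measurable_itv.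
rewrite /leb2 product_measure1E; try exact: measurable_itv.
set m1 := (X in (X * _)%E); set m2 := (X in (_ * X)%E).
have h1 : q.1 <= q.1 + s by rewrite lerDl.
have h2 : q.2 <= q.2 + s by rewrite lerDl.
have e1 : m1 = (q.1 + s - q.1)%:E.
  rewrite /m1; change (lebesgue_measure `[q.1, q.1 + s]%classic = (q.1 + s - q.1)%:E).
  exact: leb_cc h1.
have e2 : m2 = (q.2 + s - q.2)%:E.
  rewrite /m2; change (lebesgue_measure `[q.2, q.2 + s]%classic = (q.2 + s - q.2)%:E).
  exact: leb_cc h2.
by rewrite e1 e2 -EFinM lee_fin [q.1 + s]addrC [q.2 + s]addrC !addrK expr2.
Qed.

Lemma bigU_bound (R : realType) (I : Type) (s : seq I) (F : I -> set (R * R)) (v : R) :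
  0 <= v -> (forall x, measurable (F x) /\ (leb2 (F x) <= v%:E)%E) ->
  measurable (\big[setU/set0]_(x <- s) F x) /\
  (leb2 (\big[setU/set0]_(x <- s) F x) <= ((size s)%:R * v)%:E)%E.
Proof.
move=> v0 hF; rewrite /leb2 in hF *; elim: s => [|x s [IHm IHl]].
  by rewrite big_nil measure0 mul0r; split.
rewrite big_cons; have [mx lx] := hF x; split; first exact: measurableU.
apply: (le_trans (measureU2 (lebesgue_measure \x lebesgue_measure)%E mx IHm)).
by rewrite /= -addn1 natrD mulrDl mul1r addrC EFinD leeD.
Qed.

Lemma mem_bigU (R : realType) (I : eqType) (s : seq I) (F : I -> set (R * R)) x :
  x \in s -> F x `<=` \big[setU/set0]_(y <- s) F y.
Proof.
elim: s => // y s IH; rewrite inE big_cons => /orP [/eqP ->|h] p hp.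
  by left.
by right; apply: IH.
Qed.


Arguments square_meas {R} q s.
Lemma core (R : realType) (A : set (R*R)) (N : nat) (c : 'I_N -> R*R) (dl : R) :
  0 < dl -> dl <= 1 -> A `<=` \bigcup_(i in setT) square (c i) dl ->
  forall K (be : nat -> R) (ta : nat -> R*R) (q : R*R) (s : R),
  (forall k, 0 < be k) -> (forall k, be k <= dl * be k.+1) -> 0 < s ->
  1 <= be 0%N * s ->
  exists B, [/\ measurable B,
    square q s `&` [set p | forall k, (k < K)%N ->
        rescale (periodize A) (ta k) (be k) p] `<=` B &
    (leb2 B <= (s ^+ 2 * (16 * N%:R * dl ^+ 2) ^+ K)%:E)%E].
Proof.
move=> dl0 dl1 hA K; elim: K => [|K IH] be ta q s be0 beS s0 h1.
  have [mB lB] := square_meas q s (ltW s0).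
  exists (square q s); split;[done| |]; last by rewrite expr0 mulr1.
  by move=> p [].
set b0 := be 0%N; set t0 := ta 0%N.
set rho := 16 * N%:R * dl ^+ 2.
pose s' := dl / b0. pose D := b0 * s. pose Mc := (Num.truncn D + 3)%N.
pose lo1 (i : 'I_N) := Num.floor (b0 * q.1 + t0.1 - (c i).1 - dl).
pose lo2 (i : 'I_N) := Num.floor (b0 * q.2 + t0.2 - (c i).2 - dl).
pose corner (x : 'I_N * 'I_Mc * 'I_Mc) : R * R :=
  (((c x.1.1).1 + (lo1 x.1.1 + (x.1.2 : nat)%:Z)%:~R - t0.1) / b0,
   ((c x.1.1).2 + (lo2 x.1.1 + (x.2 : nat)%:Z)%:~R - t0.2) / b0).
have hb0 : 0 < b0 := be0 0%N.
have s'0 : 0 < s' by rewrite divr_gt0.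
have rho0 : 0 <= rho by rewrite /rho; apply: mulr_ge0; [apply: mulr_ge0 => //|apply: exprn_ge0; apply: ltW].
have sqs : s ^+ 2 = s ^+ 2 by [].

have hIH : forall x : 'I_N * 'I_Mc * 'I_Mc, exists B, [/\ measurable B,
   square (corner x) s' `&` [set p | forall k, (k < K)%N ->
      rescale (periodize A) (ta k.+1) (be k.+1) p] `<=` B &
   (leb2 B <= (s' ^+ 2 * rho ^+ K)%:E)%E].
  move=> x; apply: (IH (fun k => be k.+1) (fun k => ta k.+1)) => //.
  rewrite /s' mulrA ler_pdivlMr // mul1r mulrC; exact: beS.
case: (choice hIH) => Bf hBf.
have hv : 0 <= s' ^+ 2 * rho ^+ K.
  by apply: mulr_ge0; apply: exprn_ge0 => //; apply: ltW.
have [mB lB] := @bigU_bound _ _ (enum {: 'I_N * 'I_Mc * 'I_Mc}) Bf _ hv (fun x => let: And3 m _ l := hBf x in conj m l).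
exists (\big[setU/set0]_(x <- enum {: 'I_N * 'I_Mc * 'I_Mc}) Bf x); split => //.
  move=> p [Qp Fp].
  have := Fp 0%N (ltn0Sn K); rewrite /rescale /periodize /= -/b0 -/t0.
  move=> -[n [m hnm]].
  have [i _] := hA _ hnm; rewrite /square /= => -[/andP[a1 a2] /andP[a3 a4]].
  case: Qp => /andP[q1 q2] /andP[q3 q4].
  have f1 := floor_le (b0 * q.1 + t0.1 - (c i).1 - dl).
  have g1 := floorD1_gt (b0 * q.1 + t0.1 - (c i).1 - dl).
  have f2 := floor_le (b0 * q.2 + t0.2 - (c i).2 - dl).
  have g2 := floorD1_gt (b0 * q.2 + t0.2 - (c i).2 - dl).
  rewrite intrD1 -/(lo1 i) in g1; rewrite -/(lo1 i) in f1.
  rewrite intrD1 -/(lo2 i) in g2; rewrite -/(lo2 i) in f2.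
  have bq1 : b0 * q.1 <= b0 * p.1 by rewrite ler_pM2l.
  have bq2 : b0 * p.1 <= b0 * q.1 + D by rewrite /D -mulrDr ler_pM2l.
  have bq3 : b0 * q.2 <= b0 * p.2 by rewrite ler_pM2l.
  have bq4 : b0 * p.2 <= b0 * q.2 + D by rewrite /D -mulrDr ler_pM2l.
  have tD := truncnS_gt D.
  have tD' : ((Num.truncn D).+1%:R : R) = (Num.truncn D)%:R + 1 by rewrite -addn1 natrD.
  have hk1 : 0 <= n - lo1 i.
    rewrite subr_ge0 -(ler_int R); lra.
  have hk2 : 0 <= m - lo2 i.
    rewrite subr_ge0 -(ler_int R); lra.
  have hk1b : (`|n - lo1 i|%N < Mc)%N.
    rewrite -(ltr_nat R) /Mc.
    have -> : (`|n - lo1 i|%N%:R : R) = (n - lo1 i)%:~R.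
      by rewrite natr_absz ger0_norm.
    rewrite intrB natrD; have -> : ((3%N)%:R : R) = 3 by []. lra.
  have hk2b : (`|m - lo2 i|%N < Mc)%N.
    rewrite -(ltr_nat R) /Mc.
    have -> : (`|m - lo2 i|%N%:R : R) = (m - lo2 i)%:~R.
      by rewrite natr_absz ger0_norm.
    rewrite intrB natrD; have -> : ((3%N)%:R : R) = 3 by []. lra.
  apply: (@mem_bigU _ _ _ Bf (i, Ordinal hk1b, Ordinal hk2b)); first by rewrite mem_enum.
  have [_ hsub _] := hBf (i, Ordinal hk1b, Ordinal hk2b).
  apply: hsub; split; last by move=> k hk; exact: Fp k.+1 hk.
  rewrite /square /corner /=.
  have e1 : lo1 i + (`|n - lo1 i|%N)%:Z = n by rewrite gez0_abs // addrCA subrr addr0.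
  have e2 : lo2 i + (`|m - lo2 i|%N)%:Z = m by rewrite gez0_abs // addrCA subrr addr0.
  rewrite e1 e2 /s' -!mulrDl !ler_pdivrMr // !ler_pdivlMr //.
  rewrite ![_ * b0]mulrC.
  split; apply/andP; split; lra.
apply: (le_trans lB); rewrite lee_fin -cardE !card_prod !card_ord !natrM.
have D1 : 1 <= D by [].
have hMc : (Mc%:R : R) <= 4 * D.
  rewrite /Mc natrD.
  have : ((Num.truncn D)%:R : R) <= D by rewrite truncn_le; lra.
  lra.
have hMc0 : (0 : R) <= Mc%:R by [].
have hMM : (Mc%:R * Mc%:R : R) <= (4 * D) * (4 * D) by apply: ler_pM.
have e : (4 * D) * (4 * D) * s' ^+ 2 = 16 * s ^+ 2 * dl ^+ 2.
  by rewrite /D /s'; field; rewrite gt_eqF.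
have key : N%:R * Mc%:R * Mc%:R * s' ^+ 2 <= s ^+ 2 * rho.
  have h2 : Mc%:R * Mc%:R * s'^+2 <= (4*D)*(4*D)*s'^+2.
    by apply: ler_wpM2r => //; apply: exprn_ge0; apply: ltW.
  have h3 := ler_wpM2l (ler0n _ N) h2.
  rewrite e in h3; move: h3; rewrite /rho !mulrA; lra.
have E1 : N%:R * Mc%:R * Mc%:R * (s' ^+ 2 * rho ^+ K) =
  (N%:R * Mc%:R * Mc%:R * s' ^+ 2) * rho ^+ K by move: (rho ^+ K) => P; ring.
have E2 : s ^+ 2 * rho ^+ K.+1 = (s ^+ 2 * rho) * rho ^+ K by rewrite [rho ^+ K.+1]exprSr; move: (rho ^+ K) => P; ring.
rewrite E1 E2; apply: ler_wpM2r; first exact: exprn_ge0.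
exact: key.
Qed.


Lemma pow_unbounded (R : realType) (x y : R) : 1 < x -> exists M : nat, y <= x ^+ M.
Proof.
move=> x1.
have bern : forall M : nat, 1 + M%:R * (x - 1) <= x ^+ M.
  elim=> [|M IH]; first by rewrite mul0r addr0 expr0.
  rewrite exprSr -addn1 natrD.
  have h : (1 + M%:R * (x - 1)) * x <= x ^+ M * x by apply: ler_wpM2r => //; lra.
  have hM : (0 : R) <= M%:R * ((x - 1) * (x - 1)) by apply: mulr_ge0 => //; nra.
  nra.
exists (Num.truncn (y / (x - 1))).+1.
have t := truncnS_gt (y / (x - 1)).
have hx : 0 < x - 1 by lra.
rewrite ltr_pdivrMr // in t.
have := bern (Num.truncn (y / (x - 1))).+1.
lra.
Qed.

Lemma bgrow (R : realType) (b : nat -> R) (bb : R) :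
  0 <= bb -> (forall n, 0 < b n) -> (forall n, bb <= b n.+1 / b n) ->
  forall j t, bb ^+ t * b j <= b (j + t)%N.
Proof.
move=> bb0 bpos bS j; elim=> [|t IH]; first by rewrite expr0 mul1r addn0.
rewrite exprSr addnS.
have h := bS (j + t)%N; rewrite ler_pdivlMr // in h.
apply: le_trans h; rewrite [bb ^+ t * bb]mulrC -mulrA ler_wpM2l //.
Qed.

Theorem lemma2p3 (R : realType) (b : nat -> R) (bb C : R) :
  1 < bb ->
  (forall n, 0 < b n) -> b 0%N = 1 ->
  (forall n, bb <= b n.+1 / b n) ->
  0 < C ->
  forall eps0 : R, 0 < eps0 ->
  exists2 delta0 : R, 0 < delta0 &
  forall delta : R, 0 < delta -> delta < delta0 ->
  forall A : set (R * R), A `<=` unit_square ->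
  (exists N : nat, N%:R <= C / delta /\
     exists c : 'I_N -> R * R, A `<=` \bigcup_(i in setT) square (c i) delta) ->
  exists gamma : R, exists Ct : R,
    [/\ 0 < gamma, gamma < Num.min 1 (bb^-1 + eps0), 0 < Ct &
     forall (Theta : nat -> R * R) (n : nat), (0 < n)%N ->
       (leb2_outer (A_n A b Theta n) < (Ct * gamma ^+ n)%:E)%E].
Proof.
move=> bb1 bpos b0 bS C0 eps0 e0.
have bb0 : 0 < bb by lra.
have ib0 : 0 < bb^-1 by rewrite invr_gt0.
have ib1 : bb^-1 < 1 by rewrite invf_lt1.
set mn := Num.min 1 (bb^-1 + eps0).
have hmn : bb^-1 < mn by rewrite /mn lt_min ib1 /=; lra.
have mn1 : mn <= 1 by rewrite /mn ge_min lexx.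
set g := (bb^-1 + mn) / 2.
have gb : bb^-1 < g by rewrite /g; lra.
have gm : g < mn by rewrite /g; lra.
have g0 : 0 < g by lra.
have g1 : g <= 1 by lra.
have gbb : 1 < g * bb.
  by rewrite -(ltr_pdivrMr _ _ bb0) mul1r.
have [M0 hM0] := @pow_unbounded _ _ (16 * C * bb) gbb.
have bM0 : 1 <= bb ^+ M0 by apply: exprn_ege1; lra.
exists (bb ^+ M0)^-1; first by rewrite invr_gt0; lra.
move=> delta d0 dlt A hAsq [N [hN [c hc]]].
exists g, 2; split; [exact: g0 | exact: gm | lra | ].
move=> Theta n n0.
have dl1 : delta <= 1.
  apply: ltW; apply: (lt_le_trans dlt); rewrite invf_le1 //; lra.
have dM0 : delta * bb ^+ M0 < 1 by rewrite -ltr_pdivlMr ?mul1r //; lra.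
have dl1s : delta < 1 by nra.
pose P : pred nat := fun k => 1 <= delta * bb ^+ k.
have exm : exists m, P m.
  have [M hM] := @pow_unbounded _ _ (delta^-1) bb1.
  by exists M; rewrite /P -ler_pdivrMl // mulr1.
case: (ex_minnP exm) => m hm hmin.
case: m hm hmin => [|m'] hm hmin.
  have : 1 <= delta by move: hm; rewrite /P /= expr0 mulr1.
  move=> h; exfalso; lra.
have hm1 : 1 <= delta * bb ^+ m'.+1 := hm.
have hm' : delta * bb ^+ m' < 1.
  rewrite ltNge; apply/negP => h; have := hmin _ h; by rewrite ltnn.
have Mm : (M0 <= m')%N.
  rewrite leqNgt; apply/negP => h.
  have : bb ^+ m'.+1 <= bb ^+ M0 by apply: ler_weXn2l => //; lra.
  move=> hh; exfalso; nra.
set m := m'.+1.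
have ND : N%:R * delta <= C by rewrite -ler_pdivlMr.
set rho := 16 * N%:R * delta ^+ 2.
have rho0 : 0 <= rho by rewrite /rho; apply: mulr_ge0; [apply: mulr_ge0 => //|apply: exprn_ge0; lra].
have rhoC : rho <= 16 * C * delta by rewrite /rho expr2; nra.
have key : rho <= g ^+ m.
  have h1 : (g * bb) ^+ M0 <= (g * bb) ^+ m' by apply: ler_weXn2l => //; lra.
  have h2 : 16 * C * bb <= (g * bb) ^+ m' by lra.
  rewrite exprMn in h2.
  have h3 : 16 * C * delta * bb ^+ m' < 16 * C by nra.
  have h4 : 0 < bb ^+ m' by apply: exprn_gt0.
  have h5 : 16 * C <= g * (g ^+ m' * bb ^+ m').
    have : 16 * C * bb <= g ^+ m' * bb ^+ m' by [].
    nra.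
  have : 16 * C * delta < g ^+ m.
    rewrite /m exprS.
    have : 16 * C * delta * bb ^+ m' < g * g ^+ m' * bb ^+ m' by nra.
    move=> h6; rewrite -(ltr_pM2r h4); lra.
  lra.
have m0 : (0 < m)%N by [].
pose K := (n %/ m + 1)%N.
pose be k := b (k * m)%N.
pose ta k := if k is 0 then ((0:R), (0:R)) else Theta (k * m)%N.
have be0 : forall k, 0 < be k by move=> k; exact: bpos.
have beS : forall k, be k <= delta * be k.+1.
  move=> k; rewrite /be mulSn addnC.
  have h := @bgrow _ b bb (ltW bb0) bpos bS (k * m)%N m.
  have hb := bpos (k * m)%N.
  have hm2 : 1 <= delta * bb ^+ m := hm1.
  clear hm hm1 hmin exm P; nra.
have hs : 1 <= be 0%N * 1 by rewrite /be mul0n b0 mulr1.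
have [B [mB incl lB]] := @core _ _ _ _ _ d0 dl1 hc K be ta (0, 0) 1 be0 beS ltr01 hs.
have sub : A_n A b Theta n `<=` square (0, 0) 1 `&`
    [set p | forall k, (k < K)%N -> rescale (periodize A) (ta k) (be k) p].
  move=> p [[Up Pp] Jp]; split.
    by move: Up; rewrite /unit_square /square /= !add0r.
  move=> [|k] hk.
    rewrite /ta /be mul0n b0 /rescale /= !mul1r !addr0; exact: Pp.
  rewrite /ta /be; apply: Jp; apply/andP; split; first by rewrite muln_gt0.
  have hk' : (k.+1 <= n %/ m)%N by rewrite /K addn1 ltnS in hk.
  apply: leq_trans (leq_trunc_div n m).
  by rewrite leq_mul2r hk' orbT.
have le1 : (leb2_outer (A_n A b Theta n) <= leb2 B)%E.
  apply: ereal_inf_lbound; exists B => //; split => //.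
  exact: subset_trans sub incl.
apply: (le_lt_trans le1); apply: (le_lt_trans lB).
rewrite lte_fin expr1n mul1r.
have nK : (n <= m * K)%N.
  have := divn_eq n m; have := ltn_pmod n m0.
  rewrite /K mulnDr muln1 mulnC.
  move=> h1 h2; rewrite {1}h2 leq_add2l; exact: ltnW.
have r1 : rho ^+ K <= (g ^+ m) ^+ K.
  by apply: lerXn2r => //; rewrite nnegrE //; apply: exprn_ge0; lra.
have r2 : (g ^+ m) ^+ K <= g ^+ n.
  by rewrite -exprM; apply: ler_wiXn2l => //; lra.
have r3 : 0 < g ^+ n by apply: exprn_gt0.
clear hm hm1 hmin exm P; lra.
Qed.
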